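(* Fix $\mathcal D>0$ and let $J(N,\widetilde D)$ be a twice continuously differentiable real function of $N>0$, $\widetilde D>0$. For $T>0$ consider $$\min_{N>0,\ \widetilde D\ge 2\mathcal D} J(N,\widetilde D)\quad\text{subject to}\quad N\widetilde D=T .$$ Let $I\subseteq(0,\infty)$ be an open interval and assume that for every $T\in I$ this problem has a unique minimizer $(N^\star(T),\widetilde D^\star(T))$ with $\widetilde D^\star(T)>2\mathcal D$, and that $T\mapsto (N^\star(T),\widetilde D^\star(T))$ is continuous on $I$. Writing $\mu=\log N$, $\nu=\log\widetilde D$ and $J(\mu,\nu):=J(e^\mu,e^\nu)$, assume that at every such optimum $(\mu^\star(T),\nu^\star(T))$: (1) $\partial^2 J/\partial\mu\partial\nu\le 0$; (2) $\partial^2J/\partial\mu^2>0$; (3) $\partial^2J/\partial\nu^2>0$. Then for all $T_1<T_2$ in $I$: $N^\star(T_2)>N^\star(T_1)$ and $\widetilde D^\star(T_2)>\widetilde D^\star(T_1)$.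
   Context: In the paper's application, $N$ is the model size, $D$ the number of training tokens, $\widetilde D=6D+2\mathcal D$ the effective data with $\mathcal D$ the test-set size, and $J$ the two-part code length; the claim is purely analytic. *)

(* Defs.v *)
From Stdlib Require Import Reals.
From Coquelicot Require Import Coquelicot.
Open Scope R_scope.

Definition cont2 (F : R -> R -> R) (x y : R) : Prop :=
  continuous (fun p : R * R => F (fst p) (snd p)) (x, y).

Definition C2_on_pos_quadrant (J : R -> R -> R) : Prop :=
  exists J1 J2 J11 J12 J21 J22 : R -> R -> R,
    forall x y, 0 < x -> 0 < y ->
      is_derive (fun t => J t y) x (J1 x y) /\
      is_derive (fun t => J x t) y (J2 x y) /\
      is_derive (fun t => J1 t y) x (J11 x y) /\
      is_derive (fun t => J1 x t) y (J12 x y) /\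
      is_derive (fun t => J2 t y) x (J21 x y) /\
      is_derive (fun t => J2 x t) y (J22 x y) /\
      cont2 J x y /\ cont2 J1 x y /\ cont2 J2 x y /\
      cont2 J11 x y /\ cont2 J12 x y /\ cont2 J21 x y /\ cont2 J22 x y.

Definition is_constrained_min (J : R -> R -> R) (Dc T N Dt : R) : Prop :=
  0 < N /\ 2 * Dc <= Dt /\ N * Dt = T /\
  forall N' Dt', 0 < N' -> 2 * Dc <= Dt' -> N' * Dt' = T -> J N Dt <= J N' Dt'.

Definition Jlog (J : R -> R -> R) (mu nu : R) : R := J (exp mu) (exp nu).

Definition in_open_interval (a b : Rbar) (T : R) : Prop :=
  Rbar_lt a T /\ Rbar_lt T b.

(* Main.v *)
Require Import Defs.
From Stdlib Require Import Reals Lra.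
From Coquelicot Require Import Coquelicot.
Open Scope R_scope.

Definition C2D (J J1 J2 J11 J12 J21 J22 : R -> R -> R) : Prop :=
    forall x y, 0 < x -> 0 < y ->
      is_derive (fun t => J t y) x (J1 x y) /\
      is_derive (fun t => J x t) y (J2 x y) /\
      is_derive (fun t => J1 t y) x (J11 x y) /\
      is_derive (fun t => J1 x t) y (J12 x y) /\
      is_derive (fun t => J2 t y) x (J21 x y) /\
      is_derive (fun t => J2 x t) y (J22 x y) /\
      cont2 J x y /\ cont2 J1 x y /\ cont2 J2 x y /\
      cont2 J11 x y /\ cont2 J12 x y /\ cont2 J21 x y /\ cont2 J22 x y.

Lemma dlog1 (F G : R -> R -> R) m n :
  is_derive (fun t => F t (exp n)) (exp m) (G (exp m) (exp n)) ->
  is_derive (fun z => F (exp z) (exp n)) m (exp m * G (exp m) (exp n)).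
Proof.
  intros H. apply (is_derive_comp (fun t => F t (exp n)) exp m); auto.
  apply is_derive_exp.
Qed.

Lemma dlog2 (F G : R -> R -> R) m n :
  is_derive (fun t => F (exp m) t) (exp n) (G (exp m) (exp n)) ->
  is_derive (fun z => F (exp m) (exp z)) n (exp n * G (exp m) (exp n)).
Proof.
  intros H. apply (is_derive_comp (fun t => F (exp m) t) exp n); auto.
  apply is_derive_exp.
Qed.

Lemma clog (F : R -> R -> R) m n :
  cont2 F (exp m) (exp n) ->
  continuous (fun p : R * R => F (exp (fst p)) (exp (snd p))) (m, n).
Proof.
  intros H.
  apply (continuous_comp_2 (fun p : R*R => exp (fst p)) (fun p : R*R => exp (snd p)) F).
  - exact (continuous_comp fst exp (m,n) (continuous_fst m n) (continuous_exp _)).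
  - exact (continuous_comp snd exp (m,n) (continuous_snd m n) (continuous_exp _)).
  - unfold cont2 in H. simpl. exact H.
Qed.

Lemma cexp1 m n : continuous (fun p : R * R => exp (fst p)) (m, n).
Proof. exact (continuous_comp fst exp (m,n) (continuous_fst m n) (continuous_exp _)). Qed.
Lemma cexp2 m n : continuous (fun p : R * R => exp (snd p)) (m, n).
Proof. exact (continuous_comp snd exp (m,n) (continuous_snd m n) (continuous_exp _)). Qed.

Lemma cmul (f g : R * R -> R) p : continuous f p -> continuous g p ->
  continuous (fun q => f q * g q) p.
Proof. intros; apply (continuous_mult f g); auto. Qed.
Lemma cplus (f g : R * R -> R) p : continuous f p -> continuous g p ->
  continuous (fun q => f q + g q) p.
Proof. intros; apply (continuous_plus f g); auto. Qed.
Lemma cminus (f g : R * R -> R) p : continuous f p -> continuous g p ->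
  continuous (fun q => f q - g q) p.
Proof. intros; apply (continuous_minus f g); auto. Qed.

Section L.
Variables J J1 J2 J11 J12 J21 J22 : R -> R -> R.
Hypothesis HC : C2D J J1 J2 J11 J12 J21 J22.

Definition L1 m n := exp m * J1 (exp m) (exp n).
Definition L2 m n := exp n * J2 (exp m) (exp n).
Definition L11 m n := exp m * J1 (exp m) (exp n) + exp m * (exp m * J11 (exp m) (exp n)).
Definition L12 m n := exp m * (exp n * J12 (exp m) (exp n)).
Definition L21 m n := exp n * (exp m * J21 (exp m) (exp n)).
Definition L22 m n := exp n * J2 (exp m) (exp n) + exp n * (exp n * J22 (exp m) (exp n)).

Let HCe m n := HC (exp m) (exp n) (exp_pos m) (exp_pos n).

Lemma dL_1 m n : is_derive (fun z => Jlog J z n) m (L1 m n).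
Proof. unfold Jlog, L1. apply (dlog1 J J1). apply HCe. Qed.
Lemma dL_2 m n : is_derive (fun z => Jlog J m z) n (L2 m n).
Proof. unfold Jlog, L2. apply (dlog2 J J2). apply HCe. Qed.
Lemma dL1_1 m n : is_derive (fun z => L1 z n) m (L11 m n).
Proof.
  unfold L1, L11.
  apply (is_derive_mult exp (fun z => J1 (exp z) (exp n)) m (exp m)).
  - apply is_derive_exp.
  - apply (dlog1 J1 J11). apply HCe.
  - intros; apply Rmult_comm.
Qed.
Lemma dL1_2 m n : is_derive (fun z => L1 m z) n (L12 m n).
Proof.
  unfold L1, L12. apply is_derive_scal. apply (dlog2 J1 J12). apply HCe.
Qed.
Lemma dL2_1 m n : is_derive (fun z => L2 z n) m (L21 m n).
Proof.
  unfold L2, L21. apply is_derive_scal. apply (dlog1 J2 J21). apply HCe.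
Qed.
Lemma dL2_2 m n : is_derive (fun z => L2 m z) n (L22 m n).
Proof.
  unfold L2, L22.
  apply (is_derive_mult exp (fun z => J2 (exp m) (exp z)) n (exp n)).
  - apply is_derive_exp.
  - apply (dlog2 J2 J22). apply HCe.
  - intros; apply Rmult_comm.
Qed.

Ltac c2 := repeat (apply cmul || apply cplus); 
  first [apply cexp1 | apply cexp2 | apply clog; apply HCe].

Lemma cL1 m n : continuous (fun p : R*R => L1 (fst p) (snd p)) (m, n).
Proof. unfold L1. c2. Qed.
Lemma cL11 m n : continuous (fun p : R*R => L11 (fst p) (snd p)) (m, n).
Proof. unfold L11. c2. Qed.
Lemma cL12 m n : continuous (fun p : R*R => L12 (fst p) (snd p)) (m, n).
Proof. unfold L12. c2. Qed.
Lemma cL21 m n : continuous (fun p : R*R => L21 (fst p) (snd p)) (m, n).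
Proof. unfold L21. c2. Qed.
Lemma cL22 m n : continuous (fun p : R*R => L22 (fst p) (snd p)) (m, n).
Proof. unfold L22. c2. Qed.


Lemma DL2 m n : Derive (fun t => Jlog J m t) n = L2 m n.
Proof. apply is_derive_unique, dL_2. Qed.
Lemma DL1 m n : Derive (fun t => Jlog J t n) m = L1 m n.
Proof. apply is_derive_unique, dL_1. Qed.

Lemma schwarzL x y : L12 x y = L21 x y.
Proof.
  assert (H := Schwarz (Jlog J) x y).
  assert (E1 : forall u v, Derive (fun z => Derive (fun t => Jlog J z t) v) u = L21 u v).
  { intros u v. rewrite (Derive_ext _ (fun z => L2 z v)); [|intros; apply DL2].
    apply is_derive_unique, dL2_1. }
  assert (E2 : forall u v, Derive (fun z => Derive (fun t => Jlog J t z) u) v = L12 u v).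
  { intros u v. rewrite (Derive_ext _ (fun z => L1 u z)); [|intros; apply DL1].
    apply is_derive_unique, dL1_2. }
  rewrite E1, E2 in H. symmetry. apply H.
  - apply locally_2d_forall. intros u v. repeat split.
    + eexists; apply dL_1.
    + eexists; apply dL_2.
    + apply (ex_derive_ext (fun z => L2 z v)); [intros; symmetry; apply DL2|].
      eexists; apply dL2_1.
    + apply (ex_derive_ext (fun z => L1 u z)); [intros; symmetry; apply DL1|].
      eexists; apply dL1_2.
  - apply (continuity_2d_pt_ext_loc L21). apply locally_2d_forall; intros; symmetry; apply E1.
    apply continuity_2d_pt_filterlim. apply cL21.
  - apply (continuity_2d_pt_ext_loc L12). apply locally_2d_forall; intros; symmetry; apply E2.
    apply continuity_2d_pt_filterlim. apply cL12.
Qed.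


Lemma diffL m n : differentiable_pt_lim (Jlog J) m n (L1 m n) (L2 m n).
Proof.
  apply filterdiff_differentiable_pt_lim.
  apply (is_derive_filterdiff (Jlog J) m n L1 (L2 m n)).
  - exists (mkposreal _ Rlt_0_1). intros; apply dL_1.
  - apply dL_2.
  - apply cL1.
Qed.

Lemma foc Dc T Nst Dst : 0 < T -> 0 < Dc -> is_constrained_min J Dc T Nst Dst ->
  2 * Dc < Dst -> L1 (ln Nst) (ln Dst) - L2 (ln Nst) (ln Dst) = 0.
Proof.
  intros HT HDc [HN [HD [HND Hmin]]] HD2.
  assert (HDp : 0 < Dst) by lra.
  set (m0 := ln Nst). set (n0 := ln Dst).
  assert (HlnT : ln T = m0 + n0) by (unfold m0, n0; rewrite <- HND; apply ln_mult; auto).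
  assert (Hn0 : ln T - m0 = n0) by lra.
  set (phi := fun m => Jlog J m (ln T - m)).
  assert (Hd : derivable_pt_lim phi m0 (L1 m0 n0 * 1 + L2 m0 n0 * (0 - 1))).
  { unfold phi.
    apply (derivable_pt_lim_comp_2d (Jlog J) (fun m => m) (fun m => ln T - m)).
    - rewrite Hn0. apply diffL.
    - apply derivable_pt_lim_id.
    - apply derivable_pt_lim_minus. apply derivable_pt_lim_const. apply derivable_pt_lim_id. }
  set (l := L1 m0 n0 * 1 + L2 m0 n0 * (0 - 1)) in Hd.
  assert (Hl : derive_pt phi m0 (exist _ l Hd) = 0).
  { apply (deriv_minimum phi (m0 - 1) (m0 + (n0 - ln (2 * Dc)))).
    - lra.
    - assert (ln (2 * Dc) < n0) by (apply ln_increasing; lra). lra.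
    - intros x Hx1 Hx2. unfold phi, Jlog. rewrite Hn0. unfold m0, n0.
      rewrite !exp_ln by auto.
      apply Hmin.
      + apply exp_pos.
      + rewrite <- (exp_ln (2 * Dc)) by lra. apply Rlt_le, exp_increasing. lra.
      + rewrite <- exp_plus. replace (x + (ln T - x)) with (ln T) by ring. apply exp_ln; auto. }
  simpl in Hl. unfold l in Hl. lra.
Qed.

End L.
Lemma incr_of_deriv (g dg : R -> R) lo hi a b :
  (forall x, is_derive g x (dg x)) -> (forall x, lo < x < hi -> 0 < dg x) ->
  lo < a -> a < b -> b < hi -> g a < g b.
Proof.
  intros Hd Hp Ha Hab Hb.
  destruct (MVT_gen g a b dg) as [c [Hc E]].
  - intros x _; apply Hd.
  - intros x _. apply continuity_pt_filterlim. apply (ex_derive_continuous (K:=R_AbsRing) (V:=R_NormedModule) g).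
    eexists; apply Hd.
  - rewrite Rmin_left in Hc by lra. rewrite Rmax_right in Hc by lra.
    assert (0 < dg c) by (apply Hp; lra).
    assert (0 < dg c * (b - a)) by (apply Rmult_lt_0_compat; lra). lra.
Qed.

Lemma decr_of_deriv (g dg : R -> R) lo hi a b :
  (forall x, is_derive g x (dg x)) -> (forall x, lo < x < hi -> dg x < 0) ->
  lo < a -> a < b -> b < hi -> g b < g a.
Proof.
  intros Hd Hp Ha Hab Hb.
  assert (- g a < - g b); [|lra].
  apply (incr_of_deriv (fun x => - g x) (fun x => - dg x) lo hi); auto.
  - intros x. apply (is_derive_opp g x (dg x)), Hd.
  - intros x Hx. specialize (Hp x Hx). lra.
Qed.

Lemma local_to_global (f : R -> R) (T1 T2 : R) :
  (forall x, T1 <= x <= T2 -> exists d, 0 < d /\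
     forall u v, x - d < u -> u < v -> v < x + d -> T1 <= u -> v <= T2 -> f u < f v) ->
  T1 < T2 -> f T1 < f T2.
Proof.
  intros Hloc H12.
  set (E := fun s => T1 <= s <= T2 /\ forall u, T1 < u <= s -> f T1 < f u).
  assert (Hb : bound E) by (exists T2; intros s [Hs _]; lra).
  assert (He : exists x, E x) by (exists T1; split; [lra| intros u Hu; lra]).
  destruct (completeness E Hb He) as [c [Hub Hlub]].
  assert (HT1c : T1 <= c) by (apply Hub; destruct He; unfold E; split; [lra|intros; lra]).
  assert (HcT2 : c <= T2) by (apply Hlub; intros s [Hs _]; lra).
  destruct (Hloc c (conj HT1c HcT2)) as [d [Hd Hf]].
  assert (Hs : exists s, E s /\ c - d < s).
  { apply Classical_Prop.NNPP; intro Hn.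
    assert (c <= c - d); [|lra].
    apply Hlub. intros s Hs. destruct (Rle_dec s (c - d)) as [|Hr]; [auto|].
    exfalso; apply Hn; exists s; split; auto; lra. }
  destruct Hs as [s [[Hs1 Hs2] Hsc]].
  assert (Hsc' : s <= c) by (apply Hub; split; auto).
  set (w := Rmin (c + d/2) T2).
  assert (Ew : E w).
  { split. { unfold w; split; [apply Rmin_glb; lra| apply Rmin_r]. }
    intros u [Hu1 Hu2].
    destruct (Rle_dec u s) as [Hus|Hus]. { apply Hs2; lra. }
    assert (Hw1 : w <= c + d/2) by apply Rmin_l.
    assert (Hw2 : w <= T2) by apply Rmin_r.
    assert (f s < f u) by (apply Hf; lra).
    destruct (Req_dec s T1) as [->|Hne]; [lra|].
    assert (f T1 < f s) by (apply Hs2; lra). lra. }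
  assert (Hwc : w <= c) by (apply Hub; exact Ew).
  assert (HwT : w = T2).
  { unfold w in *. destruct (Rle_dec (c + d/2) T2).
    - rewrite Rmin_left in Hwc by lra. lra.
    - rewrite Rmin_right by lra. reflexivity. }
  destruct Ew as [_ Ew]. apply Ew. lra.
Qed.

Lemma posI (a b : Rbar) T : Rbar_le (Finite 0) a -> in_open_interval a b T -> 0 < T.
Proof.
  intros Ha [H1 _]. destruct a as [r| |]; simpl in *; try contradiction; lra.
Qed.

Lemma betweenI (a b : Rbar) T1 T2 u : in_open_interval a b T1 -> in_open_interval a b T2 ->
  T1 <= u <= T2 -> in_open_interval a b u.
Proof.
  intros [H1 _] [_ H2] [Hu1 Hu2]. split.
  - apply (Rbar_lt_le_trans a (Finite T1) (Finite u)); auto.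
  - apply (Rbar_le_lt_trans (Finite u) (Finite T2) b); auto.
Qed.

Lemma box_of_cont (f : R -> R -> R) x y :
  continuous (fun p : R*R => f (fst p) (snd p)) (x, y) -> 0 < f x y ->
  exists d, 0 < d /\ forall u v, Rabs (u - x) < d -> Rabs (v - y) < d -> 0 < f u v.
Proof.
  intros Hc Hp.
  apply continuity_2d_pt_filterlim in Hc.
  destruct (Hc (mkposreal _ Hp)) as [d Hd].
  exists d; split; [apply cond_pos|].
  intros u v Hu Hv. specialize (Hd u v Hu Hv). simpl in Hd.
  apply Rabs_def2 in Hd. lra.
Qed.

Lemma delta_of_cont (f : R -> R) x e : continuous f x -> 0 < e ->
  exists d, 0 < d /\ forall y, Rabs (y - x) < d -> Rabs (f y - f x) < e.
Proof.
  intros Hc He.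
  destruct (proj1 (filterlim_locally f (f x)) Hc (mkposreal _ He)) as [d Hd].
  exists d; split; [apply cond_pos|]. intros y Hy. apply (Hd y Hy).
Qed.

Section Local.
Variables J J1 J2 J11 J12 J21 J22 : R -> R -> R.
Hypothesis HC : C2D J J1 J2 J11 J12 J21 J22.

Lemma local_mono (Dc : R) (a b : Rbar) (Nstar Dstar : R -> R) :
  0 < Dc -> Rbar_le (Finite 0) a ->
  (forall T, in_open_interval a b T ->
     is_constrained_min J Dc T (Nstar T) (Dstar T) /\ 2 * Dc < Dstar T) ->
  (forall T, in_open_interval a b T -> continuous Nstar T /\ continuous Dstar T) ->
  (forall T, in_open_interval a b T ->
     L21 J21 (ln (Nstar T)) (ln (Dstar T)) <= 0 /\
     0 < L11 J1 J11 (ln (Nstar T)) (ln (Dstar T)) /\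
     0 < L22 J2 J22 (ln (Nstar T)) (ln (Dstar T))) ->
  forall T0, in_open_interval a b T0 ->
  exists d, 0 < d /\ forall u v, T0 - d < u -> u < v -> v < T0 + d ->
    in_open_interval a b u -> in_open_interval a b v ->
    ln (Nstar u) < ln (Nstar v) /\ ln (Dstar u) < ln (Dstar v).
Proof.
  intros HDc Ha0 Hmin Hcont H2 T0 HT0.
  assert (Hpos : forall T, in_open_interval a b T -> 0 < Nstar T /\ 0 < Dstar T /\
            ln (Nstar T) + ln (Dstar T) = ln T).
  { intros T HT. destruct (Hmin T HT) as [[HN [HD [HND _]]] HD2].
    repeat split; try lra. rewrite <- ln_mult by lra. rewrite HND; auto. }
  set (H := fun m n => L1 J1 m n - L2 J2 m n).
  assert (Hfoc : forall T, in_open_interval a b T -> H (ln (Nstar T)) (ln (Dstar T)) = 0).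
  { intros T HT. destruct (Hmin T HT) as [Hm HD2].
    apply (foc J J1 J2 J11 J12 J21 J22 HC Dc T); auto. apply (posI a b); auto. }
  set (m0 := ln (Nstar T0)). set (n0 := ln (Dstar T0)).
  destruct (H2 T0 HT0) as [S21 [S11 S22]]. fold m0 n0 in S21, S11, S22.
  assert (Hs := schwarzL J J1 J2 J11 J12 J21 J22 HC m0 n0).
  destruct (box_of_cont (fun u v => L11 J1 J11 u v - L21 J21 u v) m0 n0) as [e1 [He1 Hb1]].
  { apply cminus; [apply (cL11 J J1 J2 J11 J12 J21 J22 HC) | apply (cL21 J J1 J2 J11 J12 J21 J22 HC)]; auto. }
  { lra. }
  destruct (box_of_cont (fun u v => - (L12 J12 u v - L22 J2 J22 u v)) m0 n0) as [e2 [He2 Hb2]].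
  { apply (continuous_opp (fun p : R*R => L12 J12 (fst p) (snd p) - L22 J2 J22 (fst p) (snd p))).
    apply cminus; [apply (cL12 J J1 J2 J11 J12 J21 J22 HC) | apply (cL22 J J1 J2 J11 J12 J21 J22 HC)]; auto. }
  { lra. }
  set (e := Rmin e1 e2).
  assert (He : 0 < e) by (apply Rmin_glb_lt; auto).
  assert (He1' : e <= e1) by apply Rmin_l.
  assert (He2' : e <= e2) by apply Rmin_r.
  destruct (Hpos T0 HT0) as [HN0 [HD0 _]].
  destruct (Hcont T0 HT0) as [HcN HcD].
  destruct (delta_of_cont (fun T => ln (Nstar T)) T0 e) as [d1 [Hd1 Hd1']]; auto.
  { apply (continuous_comp Nstar ln); auto. apply continuous_ln; auto. }
  destruct (delta_of_cont (fun T => ln (Dstar T)) T0 e) as [d2 [Hd2 Hd2']]; auto.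
  { apply (continuous_comp Dstar ln); auto. apply continuous_ln; auto. }
  exists (Rmin d1 d2). split. { apply Rmin_glb_lt; auto. }
  assert (Hm : forall n x y, Rabs (n - n0) < e -> m0 - e < x -> x < y -> y < m0 + e ->
            H x n < H y n).
  { intros n x y Hn Hx Hxy Hy.
    apply (incr_of_deriv (fun z => H z n) (fun z => L11 J1 J11 z n - L21 J21 z n)
             (m0 - e) (m0 + e)); auto.
    - intros z. unfold H.
      apply (is_derive_minus (fun z => L1 J1 z n) (fun z => L2 J2 z n));
        [apply (dL1_1 J J1 J2 J11 J12 J21 J22 HC) | apply (dL2_1 J J1 J2 J11 J12 J21 J22 HC)]; auto.
    - intros z Hz. apply Hb1.
      + apply Rabs_def1; lra.
      + lra. }
  assert (Hn : forall m x y, Rabs (m - m0) < e -> n0 - e < x -> x < y -> y < n0 + e ->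
            H m y < H m x).
  { intros m x y Hm' Hx Hxy Hy.
    apply (decr_of_deriv (fun z => H m z) (fun z => L12 J12 m z - L22 J2 J22 m z)
             (n0 - e) (n0 + e)); auto.
    - intros z. unfold H.
      apply (is_derive_minus (fun z => L1 J1 m z) (fun z => L2 J2 m z));
        [apply (dL1_2 J J1 J2 J11 J12 J21 J22 HC) | apply (dL2_2 J J1 J2 J11 J12 J21 J22 HC)]; auto.
    - intros z Hz. assert (0 < - (L12 J12 m z - L22 J2 J22 m z)); [|lra].
      apply Hb2; [lra|]. apply Rabs_def1; lra. }
  intros u v Hu Huv Hv HIu HIv.
  assert (Hd1m : Rmin d1 d2 <= d1) by apply Rmin_l.
  assert (Hd2m : Rmin d1 d2 <= d2) by apply Rmin_r.
  assert (Au := Hd1' u ltac:(apply Rabs_def1; lra)).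
  assert (Av := Hd1' v ltac:(apply Rabs_def1; lra)).
  assert (Bu := Hd2' u ltac:(apply Rabs_def1; lra)).
  assert (Bv := Hd2' v ltac:(apply Rabs_def1; lra)).
  simpl in Au, Av, Bu, Bv. fold m0 n0 in Au, Av, Bu, Bv.
  assert (Fu := Hfoc u HIu). assert (Fv := Hfoc v HIv).
  destruct (Hpos u HIu) as [HNu [HDu Su]]. destruct (Hpos v HIv) as [HNv [HDv Sv]].
  assert (Hlt : ln u < ln v) by (apply ln_increasing; [apply (posI a b) |]; auto).
  set (mu := ln (Nstar u)) in *. set (nu := ln (Dstar u)) in *.
  set (mv := ln (Nstar v)) in *. set (nv := ln (Dstar v)) in *.
  apply Rabs_def2 in Au, Av, Bu, Bv.
  split.
  - destruct (Rlt_or_le mu mv) as [|Hle]; auto. exfalso.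
    assert (H1 : H mv nv < H mv nu) by (apply Hn; try apply Rabs_def1; lra).
    assert (H2' : H mv nu <= H mu nu).
    { destruct (Req_dec mv mu) as [->|]; [lra|]. apply Rlt_le, Hm; try apply Rabs_def1; lra. }
    lra.
  - destruct (Rlt_or_le nu nv) as [|Hle]; auto. exfalso.
    assert (H1 : H mu nv < H mv nv) by (apply Hm; try apply Rabs_def1; lra).
    assert (H2' : H mu nu <= H mu nv).
    { destruct (Req_dec nv nu) as [->|]; [lra|]. apply Rlt_le, Hn; try apply Rabs_def1; lra. }
    lra.
Qed.

End Local.

Theorem mainTheorem10
  (Dc : R) (J : R -> R -> R) (a b : Rbar) (Nstar Dstar : R -> R) :
  0 < Dc ->
  C2_on_pos_quadrant J ->
  (* I = (a, b) is an open interval contained in (0, oo) *)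
  Rbar_le (Finite 0) a -> Rbar_lt a b ->
  (* for T in I, (Nstar T, Dstar T) is the unique minimizer, with Dstar T > 2 Dc *)
  (forall T, in_open_interval a b T ->
     is_constrained_min J Dc T (Nstar T) (Dstar T) /\
     (forall N Dt, is_constrained_min J Dc T N Dt -> N = Nstar T /\ Dt = Dstar T) /\
     2 * Dc < Dstar T) ->
  (* continuity of T |-> (Nstar T, Dstar T) on I *)
  (forall T, in_open_interval a b T -> continuous Nstar T /\ continuous Dstar T) ->
  (* second-order conditions in log coordinates at the optimum *)
  (forall T, in_open_interval a b T ->
     let mu := ln (Nstar T) in
     let nu := ln (Dstar T) in
     Derive (fun m => Derive (fun n => Jlog J m n) nu) mu <= 0 /\
     0 < Derive (fun m => Derive (fun m' => Jlog J m' nu) m) mu /\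
     0 < Derive (fun n => Derive (fun n' => Jlog J mu n') n) nu) ->
  forall T1 T2, in_open_interval a b T1 -> in_open_interval a b T2 -> T1 < T2 ->
    Nstar T1 < Nstar T2 /\ Dstar T1 < Dstar T2.
Proof.
  intros HDc [J1 [J2 [J11 [J12 [J21 [J22 HC]]]]]] Ha0 Hab Hmin Hcont H2 T1 T2 HT1 HT2 H12.
  assert (HC' : C2D J J1 J2 J11 J12 J21 J22) by exact HC.
  assert (Hmin' : forall T, in_open_interval a b T ->
     is_constrained_min J Dc T (Nstar T) (Dstar T) /\ 2 * Dc < Dstar T).
  { intros T HT; destruct (Hmin T HT) as [A [_ B]]; auto. }
  assert (H2' : forall T, in_open_interval a b T ->
     L21 J21 (ln (Nstar T)) (ln (Dstar T)) <= 0 /\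
     0 < L11 J1 J11 (ln (Nstar T)) (ln (Dstar T)) /\
     0 < L22 J2 J22 (ln (Nstar T)) (ln (Dstar T))).
  { intros T HT. destruct (H2 T HT) as [A [B C]].
    set (mu := ln (Nstar T)) in *. set (nu := ln (Dstar T)) in *.
    rewrite (Derive_ext _ (fun m => L2 J2 m nu)) in A
      by (intros; apply (DL2 J J1 J2 J11 J12 J21 J22 HC')).
    assert (E : Derive (fun m => L2 J2 m nu) mu = L21 J21 mu nu) by (apply is_derive_unique, (dL2_1 J J1 J2 J11 J12 J21 J22 HC')). rewrite E in A. clear E.
    rewrite (Derive_ext _ (fun m => L1 J1 m nu)) in B
      by (intros; apply (DL1 J J1 J2 J11 J12 J21 J22 HC')).
    assert (E : Derive (fun m => L1 J1 m nu) mu = L11 J1 J11 mu nu) by (apply is_derive_unique, (dL1_1 J J1 J2 J11 J12 J21 J22 HC')). rewrite E in B. clear E.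
    rewrite (Derive_ext _ (fun n => L2 J2 mu n)) in C
      by (intros; apply (DL2 J J1 J2 J11 J12 J21 J22 HC')).
    assert (E : Derive (fun n => L2 J2 mu n) nu = L22 J2 J22 mu nu) by (apply is_derive_unique, (dL2_2 J J1 J2 J11 J12 J21 J22 HC')). rewrite E in C. clear E.
    auto. }
  assert (Hloc := local_mono J J1 J2 J11 J12 J21 J22 HC' Dc a b Nstar Dstar HDc Ha0 Hmin' Hcont H2').
  assert (Hp1 := posI a b T1 Ha0 HT1). assert (Hp2 := posI a b T2 Ha0 HT2).
  assert (Hg : forall f : R -> R,
    (forall T0, in_open_interval a b T0 -> exists d, 0 < d /\ forall u v, T0 - d < u -> u < v -> v < T0 + d ->
       in_open_interval a b u -> in_open_interval a b v -> f u < f v) -> f T1 < f T2).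
  { intros f Hf. apply local_to_global; auto.
    intros x Hx. destruct (Hf x (betweenI a b T1 T2 x HT1 HT2 Hx)) as [d [Hd Hd']].
    exists d; split; auto. intros u v Hu Huv Hv Hu1 Hv2.
    apply Hd'; auto; apply (betweenI a b T1 T2); auto; lra. }
  destruct (Hmin' T1 HT1) as [[HN1 _] HD1]. destruct (Hmin' T2 HT2) as [[HN2 _] HD2].
  split; apply ln_lt_inv; try lra.
  - apply (Hg (fun T => ln (Nstar T))). intros T0 HT0.
    destruct (Hloc T0 HT0) as [d [Hd Hd']]. exists d; split; auto.
    intros; apply Hd'; auto.
  - apply (Hg (fun T => ln (Dstar T))). intros T0 HT0.
    destruct (Hloc T0 HT0) as [d [Hd Hd']]. exists d; split; auto.
    intros; apply Hd'; auto.
Qed.
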